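(* Let $m,n\geq 3$ and let $v$ be a vertex of the torus grid $T_{m,n}=C_m\square C_n$. Then $\mathrm{ef}(v)<9$.
   Context: For a vertex $v$ of a graph, $N_i(v)$ denotes the set of vertices at distance exactly $i$ from $v$, and $\mathrm{ef}(v)=\sum_{i\geq 0}(1/2)^i|N_i(v)|$. $C_m\square C_n$ is the Cartesian product of cycles on $m$ and $n$ vertices. *)

(* Defs.v *)
From mathcomp Require Import all_boot all_order all_algebra.
Set Implicit Arguments. Unset Strict Implicit. Unset Printing Implicit Defensive.
Import Order.TTheory GRing.Theory Num.Theory.

Definition cyc_adj (m : nat) (a b : 'I_m) : bool :=
  (val b == (val a).+1 %% m) || (val a == (val b).+1 %% m).

Definition torus_adj (m n : nat) (x y : 'I_m * 'I_n) : bool :=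
  ((x.1 == y.1) && cyc_adj x.2 y.2) || ((x.2 == y.2) && cyc_adj x.1 y.1).

Section Balls.
Variables (T : finType) (adj : rel T) (v : T).

Fixpoint ball (k : nat) : {set T} :=
  match k with
  | 0 => [set v]
  | k'.+1 => ball k' :|: [set w | [exists u in ball k', adj u w]]
  end.

Definition sphere (i : nat) : {set T} :=
  ball i :\: (if i is i'.+1 then ball i' else set0).

(* ef(v) = sum_{i>=0} (1/2)^i |N_i(v)|.  Every vertex at finite distance i
   satisfies i < #|T|, so N_i(v) is empty for i >= #|T| and the sum is finite. *)
Definition ef : rat := \sum_(i < #|T|) (2%:R^-1) ^+ i * (#|sphere i|)%:R.
End Balls.

(* Main.v *)
Require Import Defs.
From mathcomp Require Import all_boot all_order all_algebra.
From mathcomp Require Import lra zify.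
Import Order.TTheory GRing.Theory Num.Theory.
Local Open Scope ring_scope.

Section Gen.
Variables (T : finType) (adj : rel T) (v : T).

Lemma ball_mono {k l} : (k <= l)%N -> ball adj v k \subset ball adj v l.
Proof.
elim: l => [|l IH] hkl.
  by move: hkl; rewrite leqn0 => /eqP ->.
move: hkl; rewrite leq_eqVlt => /orP [/eqP -> | hk]; first exact: subxx.
apply: subset_trans (IH hk) _; exact: subsetUl.
Qed.

Lemma sphere_ball i : sphere adj v i \subset ball adj v i.
Proof. by rewrite /sphere; apply: subsetDl. Qed.

Lemma sphere_disj_lt i j : (i < j)%N -> [disjoint sphere adj v i & sphere adj v j].
Proof.
case: j => [|j] // hij.
rewrite -setI_eq0; apply/eqP/setP => x; rewrite !inE.
apply/negbTE; apply/negP => /andP [/andP [_ hx]] /andP [hn _].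
by move: hn; rewrite (subsetP (ball_mono (ltnSE hij)) _ hx).
Qed.

Lemma ball_lip (f : T -> nat) : f v = 0%N -> (forall u w, adj u w -> (f w <= f u + 1)%N) ->
  forall k w, w \in ball adj v k -> (f w <= k)%N.
Proof.
move=> f0 hf; elim => [|k IH] w /=.
  by rewrite inE => /eqP ->; rewrite f0.
rewrite !inE => /orP [/IH h | /existsP [u /andP [hu ha]]].
  exact: leqW.
have := hf _ _ ha; have := IH _ hu; lia.
Qed.

Lemma ef_le (f : T -> nat) : f v = 0%N -> (forall u w, adj u w -> (f w <= f u + 1)%N) ->
  ef adj v <= \sum_w (2^-1 : rat) ^+ (f w).
Proof.
move=> f0 hf; rewrite /ef.
apply: (@le_trans _ _ (\sum_(i < #|T|) \sum_(w in sphere adj v i) (2^-1:rat)^+(f w))).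
  apply: ler_sum => i _; rewrite mulr_natr -sumr_const.
  apply: ler_sum => w hw; apply: ler_wiXn2l => //.
  apply: (@ball_lip f f0 hf); exact: (subsetP (sphere_ball i)).
rewrite -(@partition_disjoint_bigcup T 'I_#|T| rat 0 +%R (fun i : 'I_#|T| => sphere adj v i) (fun w => (2^-1:rat)^+ f w)).
  rewrite [X in _ <= X](bigID (fun w => w \in \bigcup_(i < #|T|) sphere adj v i)) /=.
  rewrite lerDl; apply: sumr_ge0 => w _; exact: exprn_ge0.
move=> i j hij; case: (ltngtP i j) => h.
- exact: sphere_disj_lt.
- rewrite disjoint_sym; exact: sphere_disj_lt.
- by move: hij; rewrite (val_inj h) eqxx.
Qed.
End Gen.

Definition cd {p} (x : 'I_p.+1) : nat := minn x (p.+1 - x).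

Lemma val_addZp1 p (x : 'I_p.+1) : (0 < p)%N -> val (x + Zp1) = ((x + 1) %% p.+1)%N.
Proof. by move=> hp /=; rewrite (modn_small (_ : 1 < p.+1)%N). Qed.

Lemma cd_step p (x : 'I_p.+1) : (0 < p)%N ->
  (cd (x + Zp1)%R <= cd x + 1)%N /\ (cd x <= cd (x + Zp1)%R + 1)%N.
Proof.
move=> hp; rewrite /cd val_addZp1 //.
have hx := ltn_ord x.
case: (ltnP (x + 1) p.+1) => h.
  rewrite modn_small //; lia.
rewrite (_ : (x + 1 = p.+1)%N); last lia.
rewrite modnn; lia.
Qed.

Lemma cyc_step p (a b c : 'I_p.+1) : (0 < p)%N -> cyc_adj a b ->
  (cd (b - c)%R <= cd (a - c)%R + 1)%N.
Proof.
move=> hp; case/orP => /eqP h.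
- have -> : b = a + Zp1 by apply: val_inj; rewrite val_addZp1 // h addn1.
  rewrite (_ : a + Zp1 - c = (a - c) + Zp1); last by rewrite addrAC.
  by case: (@cd_step _ (a - c) hp).
- have -> : a = b + Zp1 by apply: val_inj; rewrite val_addZp1 // h addn1.
  rewrite (_ : b + Zp1 - c = (b - c) + Zp1); last by rewrite addrAC.
  by case: (@cd_step _ (b - c) hp).
Qed.

Lemma geo1 k : \sum_(i < k) (2^-1:rat)^+i = 2 - 2 * 2^-1^+k.
Proof.
elim: k => [|k IH]; first by rewrite big_ord0 expr0 mulr1 subrr.
rewrite big_ord_recr /= IH exprS; lra.
Qed.

Lemma geo2 k : \sum_(i < k) (2^-1:rat)^+(k - i) = 1 - 2^-1^+k.
Proof.
elim: k => [|k IH]; first by rewrite big_ord0 expr0 subrr.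
rewrite big_ord_recl /= subn0.
under eq_bigr => i _ do rewrite /bump leq0n add1n subSS.
rewrite IH exprS; lra.
Qed.

Lemma cyc_sum p (c : 'I_p.+1) : \sum_(a : 'I_p.+1) (2^-1:rat) ^+ cd (a - c)%R < 3%:R.
Proof.
rewrite (reindex_inj (addIr c)) /=.
under eq_bigr => j _ do rewrite addrK.
have H1 : forall x : 'I_p.+1, (2^-1:rat)^+ cd x <= 2^-1^+x + 2^-1^+(p.+1 - x).
  move=> x; rewrite /cd; case: (leqP x (p.+1 - x)) => h.
    by rewrite lerDl exprn_ge0.
  by rewrite lerDr exprn_ge0.
apply: le_lt_trans (ler_sum _ (fun i _ => H1 i)) _.
rewrite big_split /= geo1 geo2.
have : 0 < (2^-1:rat)^+p.+1 by apply: exprn_gt0.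
lra.
Qed.

Theorem claim5p5 (m n : nat) (hm : (3 <= m)%N) (hn : (3 <= n)%N)
  (v : 'I_m * 'I_n) :
  ef (@torus_adj m n) v < 9%:R.
Proof.
case: m hm v => [|p] // hm; case: n hn => [|q] // hn v.
have hp : (0 < p)%N by lia.
have hq : (0 < q)%N by lia.
pose f := fun w : 'I_p.+1 * 'I_q.+1 => (cd (w.1 - v.1)%R + cd (w.2 - v.2)%R)%N.
apply: le_lt_trans (@ef_le _ _ _ f _ _) _.
- by rewrite /f !subrr.
- move=> [a1 a2] [b1 b2]; rewrite /torus_adj /f /=.
  case/orP => /andP [/eqP <- h].
  + have := @cyc_step _ a2 b2 v.2 hq h; lia.
  + have := @cyc_step _ a1 b1 v.1 hp h; lia.
have -> : \sum_(w : 'I_p.+1 * 'I_q.+1) (2^-1:rat)^+(f w) =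
   (\sum_(a : 'I_p.+1) (2^-1:rat)^+cd (a - v.1)) * (\sum_(b : 'I_q.+1) (2^-1:rat)^+cd (b - v.2)).
  rewrite big_distrlr pair_big; apply: eq_bigr => -[a b] _; by rewrite /f exprD.
set S1 := \sum_(a : 'I_p.+1) (2^-1:rat)^+cd (a - v.1).
set S2 := \sum_(b : 'I_q.+1) (2^-1:rat)^+cd (b - v.2).
have h1 : S1 < 3%:R := @cyc_sum _ v.1.
have h2 : S2 < 3%:R := @cyc_sum _ v.2.
have h3 : 0 <= S1 by apply: sumr_ge0 => i _; apply: exprn_ge0.
have h4 : 0 <= S2 by apply: sumr_ge0 => i _; apply: exprn_ge0.
have h5 : S1 * S2 <= 3%:R * S2 by apply: ler_wpM2r => //; apply: ltW.
clearbody S1 S2.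
lra.
Qed.
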